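(* Assume $d'=1$, $t>1$, fix $j\in[t]$ and $n\in[t]\setminus\{j\}$, and let $2\le r\le\min(a,d)$. Fix ordered tuples $K=(k_1,\dots,k_r)$ and $L=(l_1,\dots,l_r)$ of distinct elements of $[d]$. For every $\alpha\in\mathbb N^r$ with $\sum_m\alpha_m=r$ there exists a map $f:[r]\to[r]$ with $|f^{-1}(m)|=\alpha_m$ for all $m$ such that every directed cycle of $f$ is a fixed point. For any such $f$, define the $r\times r$ matrix $M_\alpha(y)$ by \[ (M_\alpha)_{p,q}=\omega(k_{f(p)},k_p)\,y_{n,j}(\{k_{f(p)},k_p\},l_q),\qquad p,q\in[r], \] and $D_{\alpha,L}(y)=\det M_\alpha(y)$. Then for all $W$, \[ D_{\alpha,L}(\mu(W))=\Big(\prod_{m=1}^r v_{k_m}^{\alpha_m}\Big)\det(A_{K,L}), \] where $A_{K,L}$ is the submatrix of $A$ with rows $K$ and columns $L$. Consequently, for each $1\le k<r$, all $2\times2$ minors of the catalecticant matrix with rows indexed by multi-indices $\beta\in\mathbb N^r$ of degree $k$, columns indexed by multi-indices $\gamma\in\mathbb N^r$ of degree $r-k$, and entries $D_{\beta+\gamma,L}(y)$, are homogeneous polynomials of degree $2r$ vanishing on the attention variety.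
   Context: Setup: $Q,K\in\mathbb R^{a\times d}$, $V\in\mathbb R^{1\times d}$ with row $v=(v_1,\dots,v_d)$, $A=K^\top Q$, $\varphi_W(X)=VX(X^\top AX)$ for $X=(x_{kn})\in\mathbb R^{d\times t}$. For a size-2 multiset $\mathcal A$ on $[d]$, $b\in[d]$, $n\ne j$: $c_{n,j}(\mathcal A,b)$ is the coefficient of $(\prod_{u\in\mathcal A}x_{un})x_{bj}$ in $\varphi_W(X)[1,j]$ and $y_{n,j}(\mathcal A,b)=c_{n,j}(\mathcal A,b)/|\operatorname{Perm}(\mathcal A)|$, where $\operatorname{Perm}$ is the set of distinct orderings. $\omega(u,w)=1$ if $u=w$ and $2$ if $u\ne w$. $\mu$ maps $W=(Q,K,V)$ to all scaled coefficients (ambient coordinates with the same names); the attention variety is the Zariski closure of $\operatorname{im}\mu$. *)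

(* Defs.v *)
From HB Require Import structures.
From mathcomp Require Import all_boot all_order all_algebra.
From mathcomp Require Import mpoly.
Set Implicit Arguments. Unset Strict Implicit. Unset Printing Implicit Defensive.
Import Order.TTheory GRing.Theory Num.Theory.
Local Open Scope ring_scope.

(** Size-2 multisets on [d] = {0,..,d-1}: stored as the sorted pair (u,w), u <= w. *)
Definition ms2 (d : nat) := {p : 'I_d * 'I_d | (p.1 <= p.2)%N}.

Lemma mk2_proof d (u w : 'I_d) :
  ((if (u <= w)%N then (u, w) else (w, u)).1 <= (if (u <= w)%N then (u, w) else (w, u)).2)%N.
Proof. by case: ifP => //= /negbT; rewrite -ltnNge => /ltnW. Qed.

Definition mk2 d (u w : 'I_d) : ms2 d := exist (fun p : 'I_d * 'I_d => (p.1 <= p.2)%N) _ (mk2_proof u w).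

(** |Perm(A)| : number of distinct orderings of the size-2 multiset A *)
Definition permCard d (A : ms2 d) : nat := if (val A).1 == (val A).2 then 1%N else 2%N.

Definition omega (R : ringType) d (u w : 'I_d) : R := if u == w then 1 else 2.

(** Formal variables x_{kn}, k in [d], n in [t]: polynomial ring in #|[d]x[t]| variables. *)
Definition nX (d t : nat) := #|{: 'I_d * 'I_t}|.

Definition Xmat (R : comRingType) (d t : nat) : 'M[{mpoly R[nX d t]}]_(d, t) :=
  \matrix_(k, n) 'X_(enum_rank (k, n)).

Definition Amat (R : comRingType) (a d : nat) (Q K : 'M[R]_(a, d)) : 'M[R]_d := K^T *m Q.

Definition phiW (R : comRingType) (a d t : nat) (Q K : 'M[R]_(a, d)) (V : 'rV[R]_d)
  : 'rV[{mpoly R[nX d t]}]_t :=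
  (map_mx (fun c => c%:MP) V) *m Xmat R d t
    *m (((Xmat R d t)^T *m map_mx (fun c => c%:MP) (Amat Q K)) *m Xmat R d t).

Definition monoA (d t : nat) (A : ms2 d) (n j : 'I_t) (b : 'I_d) : 'X_{1..nX d t} :=
  (U_(enum_rank ((val A).1, n)) + U_(enum_rank ((val A).2, n)) + U_(enum_rank (b, j)))%MM.

Definition cnj (R : comRingType) (a d t : nat) (Q K : 'M[R]_(a, d)) (V : 'rV[R]_d)
  (n j : 'I_t) (A : ms2 d) (b : 'I_d) : R :=
  (phiW t Q K V ord0 j)@_(monoA A n j b).

Definition ynj (R : fieldType) (a d t : nat) (Q K : 'M[R]_(a, d)) (V : 'rV[R]_d)
  (n j : 'I_t) (A : ms2 d) (b : 'I_d) : R :=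
  cnj Q K V n j A b / (permCard A)%:R.

(** Ambient coordinates: y_{n,j}(A,b) for n, j in [t], n <> j, A a size-2 multiset, b in [d].
    Stored as (((n, j), A), b). *)
Definition ycoord (d t : nat) := {c : 'I_t * 'I_t * ms2 d * 'I_d | c.1.1.1 != c.1.1.2}.

Definition mkc (d t : nat) (n j : 'I_t) (hnj : n != j) (A : ms2 d) (b : 'I_d) : ycoord d t :=
  exist (fun c : 'I_t * 'I_t * ms2 d * 'I_d => c.1.1.1 != c.1.1.2) (((n, j), A), b) hnj.

Definition mu (R : fieldType) (a d t : nat) (Q K : 'M[R]_(a, d)) (V : 'rV[R]_d)
  (c : ycoord d t) : R :=
  let: (((n, j), A), b) := val c in ynj Q K V n j A b.

Definition nY (d t : nat) := #|{: ycoord d t}|.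

Definition Yvar (R : ringType) (d t : nat) (c : ycoord d t) : {mpoly R[nY d t]} :=
  'X_(enum_rank c).

Definition evalAt (R : comRingType) (d t : nat) (p : {mpoly R[nY d t]}) (y : ycoord d t -> R) : R :=
  p.@[fun i => y (enum_val i)].

(** The attention variety: Zariski closure of the image of mu (over all W = (Q,K,V)),
    i.e. the common zero set of all polynomials vanishing on im mu. *)
Definition attention_variety (R : fieldType) (a d t : nat) (y : ycoord d t -> R) : Prop :=
  forall p : {mpoly R[nY d t]},
    (forall (Q K : 'M[R]_(a, d)) (V : 'rV[R]_d), evalAt p (mu Q K V) = 0) ->
    evalAt p y = 0.

Definition admissible (r : nat) (alpha : 'I_r -> nat) (f : 'I_r -> 'I_r) : Prop :=
  (forall m, #|[set p | f p == m]| = alpha m) /\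
  (forall (p : 'I_r) (k : nat), (0 < k)%N -> iter k f p = p -> f p = p).

Definition Dpoly (R : ringType) (d t r : nat) (n j : 'I_t) (hnj : n != j)
  (kk ll : 'I_r -> 'I_d) (f : 'I_r -> 'I_r) : {mpoly R[nY d t]} :=
  \det (\matrix_(p, q) ((omega R (kk (f p)) (kk p))%:MP
                         * Yvar R (mkc hnj (mk2 (kk (f p)) (kk p)) (ll q)))).

(* Main.v *)
Require Import Defs.
From HB Require Import structures.
From mathcomp Require Import all_boot all_order all_algebra.
From mathcomp Require Import mpoly.
From mathcomp Require Import fingroup perm.
From mathcomp Require Import ring zify.
Set Implicit Arguments. Unset Strict Implicit. Unset Printing Implicit Defensive.
Import Order.TTheory GRing.Theory Num.Theory.
Local Open Scope ring_scope.
Lemma exist_adm_gen (r : nat) (N : nat) :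
  forall (A : {set 'I_r}) (alpha : 'I_r -> nat), #|A| = N ->
  (\sum_(x in A) alpha x)%N = #|A| ->
  exists f : 'I_r -> 'I_r,
    [/\ (forall p, p \notin A -> f p = p),
        (forall p, p \in A -> f p \in A),
        (forall m, m \in A -> #|[set p in A | f p == m]| = alpha m) &
        (forall (p : 'I_r) (k : nat), (0 < k)%N -> iter k f p = p -> f p = p)].
Proof.
elim: N => [|N IH] A alpha hA hsum.
  exists id; split => //.
  by move=> m; move/eqP: hA; rewrite cards_eq0 => /eqP ->; rewrite inE.
have [all1|] := boolP [forall x in A, alpha x == 1%N].
  exists id; split => //.
  move=> m mA; rewrite (eqP (implyP (forallP all1 m) mA)).
  suff -> : [set p in A | id p == m] = [set m] by rewrite cards1.
  by apply/setP => p; rewrite !inE /=; case: (eqVneq p m) => [->|]; rewrite ?mA ?andbF.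
move=> /forallPn [x0]; rewrite negb_imply => /andP [x0A ax0].
have /existsP [x /andP [xA /eqP ax]] : [exists x in A, alpha x == 0%N].
  apply: contraT => /existsPn H.
  have hge : forall x, x \in A -> (1 <= alpha x)%N.
    by move=> x xA; move: (H x); rewrite xA /= lt0n.
  have : (#|A| < \sum_(x in A) alpha x)%N.
    rewrite -sum1_card (bigD1 x0) //= [X in (_ < X)%N](bigD1 x0) //=.
    have : (\sum_(i in A | i != x0) 1 <= \sum_(i in A | i != x0) alpha i)%N.
      apply: leq_sum => i /andP [iA _]; exact: hge.
    have : (2 <= alpha x0)%N by move: (hge x0 x0A) ax0; case: (alpha x0) => [|[|]].
    by move=> h1 h2; rewrite -addSn; apply: leq_add.
  by rewrite hsum ltnn.
have /existsP [y /andP [yA ay]] : [exists y in A, 2 <= alpha y]%N.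
  apply: contraT => /existsPn H.
  have hle : forall x, x \in A -> (alpha x <= 1)%N.
    by move=> z zA; move: (H z); rewrite zA /= -ltnNge.
  have : (\sum_(x in A) alpha x < #|A|)%N.
    rewrite -sum1_card (bigD1 x) //= [X in (_ < X)%N](bigD1 x) //= ax add0n.
    have : (\sum_(i in A | i != x) alpha i <= \sum_(i in A | i != x) 1)%N.
      apply: leq_sum => i /andP [iA _]; exact: hle.
    by move=> h; rewrite add1n ltnS.
  by rewrite hsum ltnn.
have yx : y != x by apply: contraTneq ay => ->; rewrite ax.
set A' := A :\ x.
set alpha' := fun m => if m == y then (alpha y).-1 else alpha m.
have yA' : y \in A' by rewrite !inE yx yA.
have cA : #|A| = #|A'|.+1 by rewrite (cardsD1 x A) xA.
have sA : (\sum_(z in A) alpha z = \sum_(z in A') alpha z)%N.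
  rewrite (bigD1 x) //= ax add0n; apply: eq_bigl => z; by rewrite !inE andbC.
have sA' : (\sum_(z in A') alpha z = (\sum_(z in A') alpha' z).+1)%N.
  rewrite (bigD1 y) //= [in RHS](bigD1 y) //= /alpha' eqxx -addSn prednK; last by apply: leq_trans ay.
  congr (_ + _)%N; apply: eq_bigr => z /andP [_ /negbTE ->]; done.
have [f' [f'o f'i f'c f'y]] : exists f' : 'I_r -> 'I_r,
    [/\ (forall p, p \notin A' -> f' p = p),
        (forall p, p \in A' -> f' p \in A'),
        (forall m, m \in A' -> #|[set p in A' | f' p == m]| = alpha' m) &
        (forall (p : 'I_r) (k : nat), (0 < k)%N -> iter k f' p = p -> f' p = p)].
  apply: IH; first by move: hA; rewrite cA => -[].
  by apply/eqP; rewrite -eqSS -sA' -sA hsum cA.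
have A'A : forall p, p \in A' -> p \in A by move=> p; rewrite inE => /andP [].
have xA' : x \notin A' by rewrite !inE eqxx.
pose f p := if p == x then y else f' p.
have fA' : forall p, p \in A' -> f p = f' p.
  by move=> p pA; rewrite /f; case: eqVneq pA => // ->; rewrite (negbTE xA').
have itA' : forall k p, p \in A' -> iter k f p = iter k f' p /\ iter k f' p \in A'.
  move=> k p pA; elim: k => [|k [IHk1 IHk2]] //=.
  by rewrite IHk1 fA' //; split => //; apply: f'i.
exists f; split.
- move=> p pA; have px : p != x by apply: contraNneq pA => ->.
  rewrite /f (negbTE px) f'o //; by rewrite !inE px.
- move=> p pA; rewrite /f; case: (eqVneq p x) => [_|px]; first exact: yA.
  by apply: A'A; apply: f'i; rewrite !inE px.
- move=> m mA; case: (eqVneq m x) => [->|mx].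
    rewrite ax; apply/eqP; rewrite cards_eq0; apply/eqP/setP => p; rewrite !inE /f.
    case: (eqVneq p x) => [_|px]; first by rewrite (negbTE yx) andbF.

    case pA: (p \in A) => //=; apply/negP => /eqP e.
    have : f' p \in A' by apply: f'i; rewrite !inE px pA.
    by rewrite e (negbTE xA').
  have mA' : m \in A' by rewrite !inE mx.
  case: (eqVneq y m) => [ym|ym].
    have -> : [set p in A | f p == m] = x |: [set p in A' | f' p == m].
      apply/setP => p; rewrite !inE /f; case: (eqVneq p x) => [->|px] /=; first by rewrite xA ym eqxx.
      by [].
    rewrite cardsU1 f'c // !inE eqxx /= /alpha' -ym eqxx add1n prednK //; by apply: leq_trans ay.
  have -> : [set p in A | f p == m] = [set p in A' | f' p == m].
    apply/setP => p; rewrite !inE /f; case: (eqVneq p x) => [->|px] /=; first by rewrite (negbTE ym) andbF.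
    by [].
  by rewrite f'c // /alpha' eq_sym (negbTE ym).
- move=> p k k0 hk; case: (eqVneq p x) => [px|px].
    move: hk; rewrite px; case: k k0 => // k _; rewrite iterSr {2}/f eqxx.
    by case: (itA' k y yA') => -> /[swap] -> ; rewrite (negbTE xA').
  case: (boolP (p \in A')) => pA'.
    rewrite fA' //; apply: (f'y p k k0); by case: (itA' k p pA') => <- _.
  by rewrite /f (negbTE px) f'o.
Qed.

Lemma exist_adm (r : nat) (alpha : 'I_r -> nat) :
  (\sum_(m < r) alpha m)%N = r -> exists f : 'I_r -> 'I_r, admissible alpha f.
Proof.
move=> hs.
have cT : #|[set: 'I_r]| = r by rewrite cardsT card_ord.
have hs' : (\sum_(x in [set: 'I_r]) alpha x)%N = #|[set: 'I_r]|.
  rewrite cT; rewrite -[in RHS]hs; apply: eq_bigl => z; by rewrite inE.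
have [f [_ _ fc fy]] := @exist_adm_gen r r [set: 'I_r] alpha cT hs'.
exists f; split => // m; rewrite -(fc m (in_setT m)).
by apply: eq_card => p; rewrite !inE.
Qed.
Lemma term_eq (R : comRingType) (N : nat) (x y : R) (i k l : 'I_N) :
  (x%:MP * 'X_i) * (('X_k * y%:MP) * 'X_l) = (x * y) *: 'X_[U_(i) + U_(k) + U_(l)] :> {mpoly R[N]}.
Proof. by rewrite !mpolyXD -mul_mpolyC mpolyCM; ring. Qed.

Lemma phi_entry (R : comRingType) (a d t : nat) (Q K : 'M[R]_(a, d)) (V : 'rV[R]_d) (j : 'I_t) :
  phiW t Q K V ord0 j =
  \sum_(m < t) \sum_(k < d) \sum_(b < d) \sum_(u < d)
     (V ord0 k * Amat Q K u b) *:
       'X_[U_(enum_rank (k, m)) + U_(enum_rank (u, m)) + U_(enum_rank (b, j))].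
Proof.
rewrite /phiW !mxE; apply: eq_bigr => m _.
rewrite !mxE mulr_suml; apply: eq_bigr => k _.
rewrite !mxE mulr_sumr; apply: eq_bigr => b _.
rewrite !mxE mulr_suml mulr_sumr; apply: eq_bigr => u _.
by rewrite !mxE term_eq.
Qed.

Lemma mono_eq (d t : nat) (n j : 'I_t) (hnj : n != j) (k u b' u1 u2 b : 'I_d) (m : 'I_t) :
  ((U_(enum_rank (k, m)) + U_(enum_rank (u, m)) + U_(enum_rank (b', j)) : 'X_{1..nX d t})%MM
    == (U_(enum_rank (u1, n)) + U_(enum_rank (u2, n)) + U_(enum_rank (b, j)))%MM)
  = [&& m == n, b' == b & ((k == u1) && (u == u2)) || ((k == u2) && (u == u1))].
Proof.
have jn : (j == n) = false by rewrite eq_sym (negbTE hnj).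
apply/eqP/idP.
- move=> E.
  have H : forall z : 'I_d * 'I_t,
     (((k,m)==z) + ((u,m)==z) + ((b',j)==z) = ((u1,n)==z)+((u2,n)==z)+((b,j)==z))%N.
    move=> z; move/mnmP: E => /(_ (enum_rank z)).
    by rewrite !mnmDE !mnm1E !(inj_eq enum_rank_inj).
  have nj : (n == j) = false by rewrite (negbTE hnj).
  have mn : m == n.
    apply: contraT => mn; move: (H (u1,n)); rewrite !xpair_eqE (negbTE mn) jn !andbF !eqxx /=.
    lia.
  move/eqP: mn => mn; subst m; rewrite eqxx /=.
  have bb : b' == b.
    move: (H (b',j)); rewrite !xpair_eqE nj !andbF !eqxx /= !add0n.
    rewrite -!val_eqE /=; lia.
  rewrite bb /=.
  move: (H (k,n)) (H (u,n)); rewrite !xpair_eqE !eqxx jn ?andbF ?andbT ?addn0 -!val_eqE /=.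
  clear H E; lia.
move=> /and3P [/eqP -> /eqP -> /orP [/andP [/eqP -> /eqP ->] | /andP [/eqP -> /eqP ->]]] //.
by congr (_ + _)%MM; exact: addmC.
Qed.

Lemma delta2 (R : comRingType) (d : nat) (x y : 'I_d) (F : 'I_d -> 'I_d -> R) :
  \sum_(k < d) \sum_(u < d) F k u * ((k == x) && (u == y))%:R = F x y.
Proof.
rewrite (bigD1 x) //= [X in _ + X]big1 => [|k kx]; last first.
  by apply: big1 => u _; rewrite (negbTE kx) mulr0.
rewrite addr0 (bigD1 y) //= [X in _ + X]big1 => [|u uy]; last by rewrite (negbTE uy) andbF mulr0.
by rewrite !eqxx mulr1 addr0.
Qed.

Lemma sum4 (R : comRingType) (d t : nat) (n : 'I_t) (b u1 u2 : 'I_d)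
  (F : 'I_d -> 'I_d -> 'I_d -> R) :
  \sum_(m < t) \sum_(k < d) \sum_(b' < d) \sum_(u < d)
    F k b' u * ([&& m == n, b' == b & ((k == u1) && (u == u2)) || ((k == u2) && (u == u1))])%:R
  = if u1 == u2 then F u1 b u1 else F u1 b u2 + F u2 b u1.
Proof.
rewrite (bigD1 n) //= [X in _ + X]big1 => [|m mn]; last first.
  by apply: big1 => k _; apply: big1 => b' _; apply: big1 => u _; rewrite (negbTE mn) mulr0.
rewrite addr0 eqxx /=.
transitivity (\sum_(k < d) \sum_(u < d)
    F k b u * (((k == u1) && (u == u2)) || ((k == u2) && (u == u1)))%:R).
  apply: eq_bigr => k _.
  rewrite (bigD1 b) //= [X in _ + X]big1 => [|b' bb]; last by apply: big1 => u _; rewrite (negbTE bb) mulr0.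
  by rewrite eqxx addr0.
case: eqVneq => [<-|u12].
  rewrite -(delta2 u1 u1 (fun k u => F k b u)); apply: eq_bigr => k _; apply: eq_bigr => u _.
  by rewrite orbb.
transitivity (\sum_(k < d) \sum_(u < d) (F k b u * ((k == u1) && (u == u2))%:R
                                      + F k b u * ((k == u2) && (u == u1))%:R)).
  apply: eq_bigr => k _; apply: eq_bigr => u _; rewrite -mulrDr -natrD; congr (_ * _%:R).
  move: u12; rewrite -!val_eqE /=; lia.
rewrite -(delta2 u1 u2 (fun k u => F k b u)) -(delta2 u2 u1 (fun k u => F k b u)) -big_split /=.
by apply: eq_bigr => k _; rewrite -big_split.
Qed.

Lemma phi_coef (R : comRingType) (a d t : nat) (Q K : 'M[R]_(a, d)) (V : 'rV[R]_d)
  (n j : 'I_t) (hnj : n != j) (u1 u2 b : 'I_d) :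
  (phiW t Q K V ord0 j)@_(U_(enum_rank (u1, n)) + U_(enum_rank (u2, n)) + U_(enum_rank (b, j)))%MM
  = if u1 == u2 then V ord0 u1 * Amat Q K u1 b
    else V ord0 u1 * Amat Q K u2 b + V ord0 u2 * Amat Q K u1 b.
Proof.
rewrite phi_entry -(sum4 n b u1 u2 (fun k b' u => V ord0 k * Amat Q K u b')).
rewrite raddf_sum; apply: eq_bigr => m _.
rewrite raddf_sum; apply: eq_bigr => k _.
rewrite raddf_sum; apply: eq_bigr => b' _.
rewrite raddf_sum; apply: eq_bigr => u _.
by rewrite /= mcoeffZ mcoeffX mono_eq.
Qed.

Lemma omega_ynj (R : realFieldType) (a d t : nat) (Q K : 'M[R]_(a, d)) (V : 'rV[R]_d)
  (n j : 'I_t) (hnj : n != j) (u w b : 'I_d) :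
  omega R u w * ynj Q K V n j (mk2 u w) b
  = if u == w then V ord0 u * Amat Q K u b
    else V ord0 u * Amat Q K w b + V ord0 w * Amat Q K u b.
Proof.
have h2 : (2 : R) != 0 by rewrite pnatr_eq0.
rewrite /ynj /cnj /monoA /permCard /omega /mk2 /=.
case: (u <= w)%N => /=; rewrite phi_coef //; case: (eqVneq u w) => [->|uw];
  rewrite ?eqxx ?(negbTE uw) ?(eq_sym w u) ?(negbTE uw) /= ?divr1 ?mul1r //.
  by rewrite mulrC divfK.
by rewrite mulrC divfK // addrC.
Qed.
Lemma perm_cycle_fix (r : nat) (f : 'I_r -> 'I_r) (s : 'S_r) :
  (forall (p : 'I_r) (k : nat), (0 < k)%N -> iter k f p = p -> f p = p) ->
  (forall i, s i = i \/ s i = f i) -> s = 1%g.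
Proof.
move=> hf hs; apply/permP => p; rewrite perm1.
case: (eqVneq (s p) p) => // sp.
have inj : forall k x y, iter k s x = iter k s y -> x = y.
  elim=> [|k IH] x y //= /perm_inj; exact: IH.
have Hns : forall k, s (iter k s p) != iter k s p.
  move=> k; apply/negP => /eqP e.
  have e' : s p = p by apply: (inj k); rewrite -iterSr iterS e.
  by rewrite e' eqxx in sp.
have Hit : forall k, iter k s p = iter k f p.
  elim=> // k IH; rewrite /= -IH.
  case: (hs (iter k s p)) => e //; by move: (Hns k); rewrite e eqxx.
have o := order_gt0 s.
have : iter #[s]%g f p = p by rewrite -Hit -permX expg_order perm1.
move/(hf p _ o) => fp; case: (hs p) => e; first by rewrite e.
by move: sp; rewrite e fp eqxx.
Qed.

Lemma sum_delta (R : comRingType) (r : nat) (j : 'I_r) (F : 'I_r -> R) :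
  \sum_(i < r) (i == j)%:R * F i = F j.
Proof.
rewrite (bigD1 j) //= [X in _ + X]big1 => [|i ij]; first by rewrite eqxx mul1r addr0.
by rewrite (negbTE ij) mul0r.
Qed.

Lemma det_main (R : fieldType) (r : nat) (f : 'I_r -> 'I_r) (c g : 'I_r -> R) (Am : 'M[R]_r) :
  (forall (p : 'I_r) (k : nat), (0 < k)%N -> iter k f p = p -> f p = p) ->
  \det (\matrix_(p, q) (c p * Am p q + (f p != p)%:R * g p * Am (f p) q))
  = (\prod_p c p) * \det Am.
Proof.
move=> hf.
pose B := \matrix_(p, p') (c p * (p' == p)%:R + (f p != p)%:R * g p * (p' == f p)%:R) : 'M[R]_r.
have -> : \matrix_(p, q) (c p * Am p q + (f p != p)%:R * g p * Am (f p) q) = B *m Am.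
  apply/matrixP => p q; rewrite !mxE.
  rewrite (eq_bigr (fun p' => c p * ((p' == p)%:R * Am p' q)
             + (f p != p)%:R * g p * ((p' == f p)%:R * Am p' q))); last first.
    by move=> p' _; rewrite mxE mulrDl !mulrA [c p * _]mulrC.
  by rewrite big_split /= -!mulr_sumr !sum_delta.
rewrite det_mulmx; congr (_ * _).
rewrite /determinant (bigD1 1%g) //= [X in _ + X]big1 => [|s s1].
  rewrite odd_perm1 expr0 mul1r addr0; apply: eq_bigr => i _; rewrite perm1 mxE eqxx mulr1.
  case: (eqVneq (f i) i) => [e|ne] /=; rewrite ?mul0r ?mulr0 ?addr0 //.
apply/eqP; rewrite mulf_eq0; apply/orP; right; apply: contraT => nz.
have hs : forall i, s i = i \/ s i = f i.
  move=> i; have : B i (s i) != 0.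
    by apply: contra nz => /eqP h; apply/prodf_eq0; exists i => //; rewrite h.
  rewrite mxE; case: (eqVneq (s i) i) => [e|ne]; first by left.
  case: (eqVneq (s i) (f i)) => [e|ne2]; first by right.
  by rewrite mulr0 add0r mulr0 eqxx.
by move: s1; rewrite (perm_cycle_fix hf hs) eqxx.
Qed.

Lemma prod_homog1 (R : comRingType) (N r : nat) (F : 'I_r -> {mpoly R[N]}) :
  (forall i, F i \is 1.-homog) -> \prod_(i < r) F i \is r.-homog.
Proof.
move=> hF.
have H : forall s : seq 'I_r, \prod_(i <- s) F i \is (size s).-homog.
  elim=> [|x s IH]; first by rewrite big_nil dhomog1.
  by rewrite big_cons /= -add1n; apply: dhomogM.
have := H (index_enum 'I_r).
have -> // : size (index_enum 'I_r) = r.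
by rewrite /index_enum unlock /= -enumT -cardT card_ord.
Qed.

Lemma Dpoly_homog (R : comRingType) (d t r : nat) (n j : 'I_t) (hnj : n != j)
  (kk ll : 'I_r -> 'I_d) (f : 'I_r -> 'I_r) :
  Dpoly R hnj kk ll f \is r.-homog.
Proof.
rewrite /Dpoly /determinant; apply: rpred_sum => s _.
rewrite mulr_sign; set P := \prod_i _.
have : P \is r.-homog.
  apply: prod_homog1 => i; rewrite mxE mul_mpolyC; apply: dhomogZ.
  by rewrite /Yvar dhomogX; apply/eqP; apply: mdeg1.
by case: (odd_perm s) => // hP; rewrite rpredN.
Qed.

Lemma evalAtB (R : comRingType) (d t : nat) (p q : {mpoly R[nY d t]}) (y : ycoord d t -> R) :
  evalAt (p - q) y = evalAt p y - evalAt q y.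
Proof. exact: mevalB. Qed.

Lemma evalAtM (R : comRingType) (d t : nat) (p q : {mpoly R[nY d t]}) (y : ycoord d t -> R) :
  evalAt (p * q) y = evalAt p y * evalAt q y.
Proof. exact: mevalM. Qed.

Lemma prod_fib (R : comRingType) (r : nat) (f : 'I_r -> 'I_r) (F : 'I_r -> R) (alpha : 'I_r -> nat) :
  (forall m, #|[set p | f p == m]| = alpha m) ->
  \prod_(p < r) F (f p) = \prod_(m < r) F m ^+ alpha m.
Proof.
move=> hfib.
rewrite (partition_big f xpredT) //=; apply: eq_bigr => m _.
rewrite (eq_bigr (fun _ => F m)); last by move=> p /eqP ->.
rewrite (eq_bigl (fun p => p \in [set p | f p == m])); last by move=> p; rewrite inE.
by rewrite prodr_const hfib.
Qed.

Theorem mainTheorem12 (R : realFieldType) (a d t : nat) (j n : 'I_t) (hnj : n != j)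
  (r : nat) (kk ll : 'I_r -> 'I_d) :
  (1 < t)%N -> (2 <= r)%N -> (r <= minn a d)%N -> injective kk -> injective ll ->
  (* existence of an admissible f *)
  (forall alpha : 'I_r -> nat, (\sum_(m < r) alpha m)%N = r ->
     exists f : 'I_r -> 'I_r, admissible alpha f) /\
  (* the determinant identity, for every admissible f *)
  (forall (alpha : 'I_r -> nat) (f : 'I_r -> 'I_r),
     (\sum_(m < r) alpha m)%N = r -> admissible alpha f ->
     forall (Q K : 'M[R]_(a, d)) (V : 'rV[R]_d),
       evalAt (Dpoly R hnj kk ll f) (mu Q K V)
       = (\prod_(m < r) V ord0 (kk m) ^+ alpha m)
         * \det (\matrix_(p, q) Amat Q K (kk p) (ll q))) /\
  (* catalecticant 2x2 minors, for any choice of admissible f for each alpha *)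
  (forall F : ('I_r -> nat) -> 'I_r -> 'I_r,
     (forall alpha : 'I_r -> nat, (\sum_(m < r) alpha m)%N = r -> admissible alpha (F alpha)) ->
     forall k : nat, (1 <= k)%N -> (k < r)%N ->
     forall b1 b2 g1 g2 : 'I_r -> nat,
       (\sum_(m < r) b1 m)%N = k -> (\sum_(m < r) b2 m)%N = k ->
       (\sum_(m < r) g1 m)%N = (r - k)%N -> (\sum_(m < r) g2 m)%N = (r - k)%N ->
       let D := fun (be ga : 'I_r -> nat) =>
                  Dpoly R hnj kk ll (F (fun m => (be m + ga m)%N)) in
       let minor := D b1 g1 * D b2 g2 - D b1 g2 * D b2 g1 in
       minor \is (2 * r)%N.-homog /\
       (forall y : ycoord d t -> R, attention_variety a y -> evalAt minor y = 0)).
Proof.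
move=> t1 r2 rmin hkk hll.
have P2 : forall (alpha : 'I_r -> nat) (f : 'I_r -> 'I_r),
     (\sum_(m < r) alpha m)%N = r -> admissible alpha f ->
     forall (Q K : 'M[R]_(a, d)) (V : 'rV[R]_d),
       evalAt (Dpoly R hnj kk ll f) (mu Q K V)
       = (\prod_(m < r) V ord0 (kk m) ^+ alpha m)
         * \det (\matrix_(p, q) Amat Q K (kk p) (ll q)).
  move=> alpha f hs [hfib hcyc] Q K V.
  rewrite /evalAt /Dpoly -det_map_mx.
  set Am := \matrix_(p, q) Amat Q K (kk p) (ll q).
  have -> : map_mx (meval (fun i => mu Q K V (enum_val i)))
      (\matrix_(p, q) ((omega R (kk (f p)) (kk p))%:MP
                         * Yvar R (mkc hnj (mk2 (kk (f p)) (kk p)) (ll q))))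
    = \matrix_(p, q) (V ord0 (kk (f p)) * Am p q + (f p != p)%:R * V ord0 (kk p) * Am (f p) q).
    apply/matrixP => p q; rewrite !mxE mevalM mevalC /Yvar mevalXU enum_rankK /mu /mkc /=.
    rewrite omega_ynj // (inj_eq hkk).
    case: (eqVneq (f p) p) => [e|ne] /=; rewrite ?e /Amat !mxE /=; ring.

  by rewrite det_main // (prod_fib (fun m => V ord0 (kk m)) hfib).
split; first by move=> alpha; exact: exist_adm.
split; first exact: P2.
move=> F hF k k1 kr b1 b2 g1 g2 s1 s2 s3 s4 D minor.
have hsum : forall be ga : 'I_r -> nat, (\sum_(m < r) be m)%N = k ->
    (\sum_(m < r) ga m)%N = (r - k)%N -> (\sum_(m < r) (be m + ga m))%N = r.
  by move=> be ga h1 h2; rewrite big_split /= h1 h2 subnKC // ltnW.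
split.
  rewrite /minor /D mul2n -addnn; apply: rpredB; apply: dhomogM; exact: Dpoly_homog.
move=> y hy; apply: hy => Q K V.
have E : forall be ga : 'I_r -> nat, (\sum_(m < r) be m)%N = k ->
    (\sum_(m < r) ga m)%N = (r - k)%N ->
    evalAt (D be ga) (mu Q K V) =
     (\prod_(m < r) V ord0 (kk m) ^+ be m) * (\prod_(m < r) V ord0 (kk m) ^+ ga m)
       * \det (\matrix_(p, q) Amat Q K (kk p) (ll q)).
  move=> be ga h1 h2; rewrite /D (P2 (fun m => (be m + ga m)%N)) ?hsum //; last by apply: hF; rewrite hsum.
  by rewrite -big_split /=; congr (_ * _); apply: eq_bigr => m _; rewrite exprD.
rewrite /minor; move: (E b1 g1 s1 s3) (E b2 g2 s2 s4) (E b1 g2 s1 s4) (E b2 g1 s2 s3).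
clear E; clearbody minor; clearbody D.
move: (D b1 g1) (D b2 g2) (D b1 g2) (D b2 g1) => x1 x2 x3 x4 e1 e2 e3 e4.
rewrite evalAtB !evalAtM e1 e2 e3 e4; ring.
Qed.
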